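(* Let $r$ be a rational number with $0<r<1$ and $r\neq1/p$ for every integer $p\ge2$, written $r=[m_1,\dots,m_k]$ with $k\ge2$, $m_i\in\mathbb{Z}_{>0}$, $m_k\ge2$, let $n\ge2$ be an integer, and let $(S_1,S_2,S_1,S_2)$ be the decomposition of $CS(r)$ described in the context; put $m=m_1$. (1) If $k$ is even and $s$ is a rational number with $[m_1,\dots,m_k,2n-2]<s<[m_1,\dots,m_{k-1}]$, then $CS(s)$ contains $(m,S_{1e},d\langle S_2,S_1\rangle,S_2,S_{1b},m)$ as a subsequence for some integer $d$ with $1\le d\le 2n-3$, where $(m+1,S_{1e})=(S_{1b},m+1)=S_1$. (2) If $k$ is odd and $s$ is a rational number with $[m_1,\dots,m_{k-1}]<s<[m_1,\dots,m_k,2n-2]$, then $CS(s)$ contains $(m+1,S_{2e},d\langle S_1,S_2\rangle,S_1,S_{2b},m+1)$ as a subsequence for some integer $d$ with $1\le d\le 2n-3$, where $(m,S_{2e})=(S_{2b},m)=S_2$.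
   Context: Continued fractions: $[m_1,\dots,m_k]=1/(m_1+1/(m_2+\cdots+1/m_k))$; when $k-1=1$, $[m_1,\dots,m_{k-1}]=1/m_1$. For $s\in\mathbb{Q}\cup\{\infty\}$, $u_s$ is the cyclically reduced, cyclically alternating word in the free group $F(a,b)$ representing the simple loop of slope $s$ on the 4-punctured 2-bridge sphere in the upper tangle complement (well defined up to cyclic permutation and inversion). For a cyclically reduced cyclic word $(w)$, decompose it cyclically into maximal subwords alternately positive (all exponents $+1$) and negative (all exponents $-1$); $CS(w)$ is the cyclic sequence of their lengths, and $CS(s):=CS(u_s)$. $CS(r)$ consists of $m$ and $m+1$ and has a decomposition $CS(r)=((S_1,S_2,S_1,S_2))$ in which each $S_i$ is symmetric (equal to its reverse) and occurs only twice in $CS(r)$, $S_1$ begins and ends with $m+1$, and $S_2$ begins and ends with $m$; this is the decomposition meant. $d\langle A,B\rangle$ denotes $(A,B,\dots,A,B)$ with $d$ copies of $(A,B)$. ''Contains as a subsequence'' means occurs as a block of consecutive terms of the cyclic sequence. *)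

(* Defs.v *)
From HB Require Import structures.
From mathcomp Require Import all_boot all_order all_algebra.
Set Implicit Arguments. Unset Strict Implicit. Unset Printing Implicit Defensive.
Import Order.TTheory GRing.Theory Num.Theory.

(* Continued fraction [m_1,...,m_k] = 1/(m_1 + 1/(m_2 + ... + 1/m_k)).
   With cf [::] = 0 we get cf [:: m] = 1/m, as in the paper. *)
Definition cf (ms : seq nat) : rat :=
  foldr (fun (m : nat) (x : rat) => ((m%:R : rat) + x)^-1)%R 0%R ms.

(* A word in F(a,b) as a list of letters (is_a, exponent_is_+1). *)
Definition word := seq (bool * bool).

(* u_{q/p} (0 < q < p coprime): the cyclically alternating word
   a^{e_1} b^{e_2} a^{e_3} ... b^{e_{2p}}, e_i = (-1)^{floor((i-1)q/p)}. *)
Definition uword (q p : nat) : word :=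
  [seq (~~ odd i, ~~ odd ((i * q) %/ p)) | i <- iota 0 (2 * p)].

Definition u_s (s : rat) : word := uword `|numq s|%N `|denq s|%N.

Fixpoint runs_aux (b : bool) (c : nat) (l : seq bool) : seq nat :=
  match l with
  | [::] => [:: c]
  | x :: l' => if x == b then runs_aux b c.+1 l' else c :: runs_aux x 1 l'
  end.

Definition runs (l : seq bool) : seq nat :=
  if l is x :: l' then runs_aux x 1 l' else [::].

(* cyclic run lengths: cut the cyclic sequence at the first run boundary *)
Definition cyc_runs (l : seq bool) : seq nat :=
  let n := size l in
  let i := find (fun j => nth false l j != nth false l ((j + n).-1 %% n))
                (iota 0 n) in
  runs (rot i l).

(* CS(w): cyclic sequence (represented by a linear representative, up to
   rotation) of lengths of maximal positive / negative subwords. *)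
Definition CSw (w : word) : seq nat := cyc_runs (map snd w).
Definition CS (s : rat) : seq nat := CSw (u_s s).

Definition cyc_occ (cs b : seq nat) : nat :=
  count (fun i => prefix b (rot i cs)) (iota 0 (size cs)).

Definition cyc_contains (cs b : seq nat) : bool :=
  has (fun i => prefix b (rot i cs)) (iota 0 (size cs)).

Definition dpair (d : nat) (A B : seq nat) : seq nat := flatten (nseq d (A ++ B)).

(* Main.v *)
Require Import Defs.
From mathcomp Require Import all_boot all_order all_algebra zify ring lra.
Import Order.TTheory GRing.Theory Num.Theory.

Definition cdiv (x a : nat) := (x + a.-1) %/ a.

Lemma cdiv_le x a i : 0 < a -> (cdiv x a <= i) = (x <= i * a).
Proof.
move=> a0; rewrite /cdiv -ltnS ltn_divLR //.
apply/idP/idP => H; lia.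
Qed.

Lemma cdiv_eq x a y : 0 < a -> x <= y * a -> y * a < x + a -> cdiv x a = y.
Proof.
move=> a0 h1 h2; apply/eqP; rewrite eqn_leq cdiv_le // h1 /=.
case: y h1 h2 => // y h1 h2; rewrite ltnNge cdiv_le //; lia.
Qed.

Lemma cdiv_ge x a : 0 < a -> x <= cdiv x a * a.
Proof. by move=> a0; rewrite -cdiv_le. Qed.

Lemma cdiv_lt x a : 0 < a -> cdiv x a * a < x + a.
Proof.
move=> a0; case E: (cdiv x a) => [|c]; first lia.
have : ~~ (cdiv x a <= c) by rewrite E ltnn.
rewrite cdiv_le //; lia.
Qed.

Fixpoint alt (x : bool) (cs : seq nat) : seq bool :=
  if cs is c :: cs' then nseq c x ++ alt (~~ x) cs' else [::].

Lemma runs_aux_nseq x k c l : runs_aux x k (nseq c x ++ l) = runs_aux x (k + c) l.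
Proof.
elim: c k => [|c IH] k /=; first by rewrite addn0.
by rewrite eqxx IH addSnnS.
Qed.

Lemma runs_aux_alt cs x k : all (fun c => 0 < c) cs ->
  runs_aux x k (alt (~~ x) cs) = k :: cs.
Proof.
elim: cs x k => [|c cs IH] x k //= /andP[c0 hcs].
case: c c0 => // c _ /=.
rewrite (_ : (~~ x == x) = false); last by case: x.
rewrite runs_aux_nseq add1n. have := IH (~~ x) c.+1 hcs. rewrite negbK => ->. done.
Qed.

Lemma runs_alt x cs : all (fun c => 0 < c) cs -> cs != [::] -> runs (alt x cs) = cs.
Proof.
case: cs => // c cs /= /andP[c0 hcs] _.
case: c c0 => // c _ /=.
by rewrite runs_aux_nseq add1n runs_aux_alt.
Qed.

Definition Cf (a b j : nat) := cdiv (j * b) a.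
Definition lenf (a b j : nat) := Cf a b j.+1 - Cf a b j.

Lemma Cf_mono a b i j : 0 < a -> i <= j -> Cf a b i <= Cf a b j.
Proof. move=> a0 ij; rewrite /Cf /cdiv leq_div2r //; nia. Qed.

Lemma Cf_step a b j : 0 < a -> a <= b -> Cf a b j < Cf a b j.+1.
Proof.
move=> a0 ab; rewrite ltnNge cdiv_le //.
have := @cdiv_lt (j * b) a a0; rewrite -/(Cf a b j).
have := @cdiv_ge (j.+1 * b) a a0; rewrite -/(Cf a b j.+1) => h1 h2.
nia.
Qed.

Lemma Cf_2a a b : 0 < a -> Cf a b (2 * a) = 2 * b.
Proof. move=> a0; apply: cdiv_eq => //; nia. Qed.

Lemma Cf0 a b : 0 < a -> Cf a b 0 = 0.
Proof. by move=> a0; apply: cdiv_eq. Qed.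

Lemma map_iota_const (f : nat -> bool) y s n :
  (forall i, s <= i < s + n -> f i = y) -> map f (iota s n) = nseq n y.
Proof.
elim: n s => [|n IH] s H //=.
rewrite H ?IH //; [move=> i hi; apply: H|]; lia.
Qed.

Lemma bits_block a b j0 : 0 < a -> a <= b -> j0 <= 2 * a ->
  [seq ~~ odd (i * a %/ b) | i <- iota (Cf a b j0) (2 * b - Cf a b j0)]
  = alt (~~ odd j0) [seq lenf a b j | j <- iota j0 (2 * a - j0)].
Proof.
move=> a0 ab.
have b0 : 0 < b by lia.
move Et: (2 * a - j0) => t.
elim: t j0 Et => [|t IH] j0 Et hj.
  have -> : j0 = 2 * a by lia.
  by rewrite Cf_2a // subnn.
have hj1 : Cf a b j0.+1 <= 2 * b by rewrite -(@Cf_2a a b a0); apply: Cf_mono => //; lia.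
have hs := @Cf_step a b j0 a0 ab.
rewrite (_ : 2 * b - Cf a b j0 = lenf a b j0 + (2 * b - Cf a b j0.+1)); last first.
  by rewrite /lenf; lia.
rewrite iotaD map_cat /=.
rewrite (_ : Cf a b j0 + lenf a b j0 = Cf a b j0.+1); last by rewrite /lenf; lia.
rewrite IH; [|lia|lia]. rewrite oddS negbK; congr (_ ++ _).
apply: map_iota_const => i /andP[h1 h2].
have e : i * a %/ b = j0.
  have h1' : j0 * b <= i * a by move: h1; rewrite /Cf cdiv_le // mulnC.
  have h2' : i * a < j0.+1 * b.
    move: h2; rewrite (_ : Cf a b j0 + (Cf a b j0.+1 - Cf a b j0) = Cf a b j0.+1); last lia.
    by rewrite /Cf ltnNge cdiv_le // -ltnNge mulnC.
  apply/eqP; rewrite eqn_leq leq_divRL // h1' andbT -ltnS ltn_divLR //.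
by rewrite e.
Qed.

Lemma CSw_uword a b : 0 < a -> a <= b ->
  CSw (uword a b) = mkseq (lenf a b) (2 * a).
Proof.
move=> a0 ab.
have b0 : 0 < b by lia.
rewrite /CSw /uword -map_comp.
set l := map _ _.
have El : l = [seq ~~ odd (i * a %/ b) | i <- iota 0 (2 * b)] by [].
have sl : size l = 2 * b by rewrite size_map size_iota.
rewrite /cyc_runs sl.
have -> : find (fun j => nth false l j != nth false l ((j + 2 * b).-1 %% (2 * b))) (iota 0 (2 * b)) = 0.
  have -> : iota 0 (2 * b) = 0 :: iota 1 (2 * b).-1 by case: b b0 ab {El sl l} => // b; rewrite mulnS.
  rewrite /= add0n modn_small; last lia.
  rewrite El (nth_map 0) ?size_iota; last lia.
  rewrite (nth_map 0) ?size_iota; last lia.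
  rewrite nth_iota; last lia.
  rewrite nth_iota; last lia.
  rewrite add0n mul0n div0n /=.
  have -> : (2 * b).-1 * a %/ b = (2 * a).-1.
    apply/eqP; rewrite eqn_leq -ltnS.
    have -> : ((2 * a).-1).+1 = 2 * a by lia.
    rewrite ltn_divLR // leq_divRL //; apply/andP; split; nia.
  have -> : (2 * a).-1 = (a.-1).*2.+1 by lia.
  by rewrite /= negbK odd_double.
rewrite rot0 El.
have := @bits_block a b 0 a0 ab (leq0n _).
rewrite Cf0 // !subn0 => ->.
rewrite runs_alt //.
- apply/allP => x /mapP[j _ ->]; rewrite /lenf; have := @Cf_step a b j a0 ab; lia.
- by rewrite -size_eq0 size_map size_iota; lia.
Qed.

Lemma CS_formula (s : rat) : (0 < s < 1)%R ->
  CS s = mkseq (lenf `|numq s|%N `|denq s|%N) (2 * `|numq s|%N).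
Proof.
move=> /andP[s0 s1].
rewrite /CS /u_s CSw_uword //.
- by rewrite absz_gt0 numq_eq0 gt_eqF.
- have hn : (0 < numq s)%R by rewrite numq_gt0.
  have hd : (0 < denq s)%R by [].
  have : (numq s < denq s)%R.
    have : (s * (denq s)%:~R < (denq s)%:~R)%R by rewrite gtr_pMl // ltr0z.
    by rewrite -numqE ltr_int.
  move: hn hd; case: (numq s) => // p; case: (denq s) => // q /= _ _.
  by rewrite ltz_nat => /ltnW.
Qed.

Lemma nth_rot_mkseq (f : nat -> nat) n j k : (forall x, f (x + n) = f x) ->
  j <= n -> k < n -> nth 0 (rot j (mkseq f n)) k = f (j + k).
Proof.
move=> per jn kn; rewrite /rot nth_cat size_drop size_mkseq.
case: ltnP => h.
  rewrite nth_drop nth_mkseq //; lia.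
rewrite nth_take; last lia.
rewrite nth_mkseq; last lia.
by rewrite -per; congr f; lia.
Qed.

Lemma per_mul (f : nat -> nat) n : (forall x, f (x + n) = f x) ->
  forall q x, f (x + q * n) = f x.
Proof. move=> per; elim=> [|q IH] x; first by rewrite addn0. by rewrite mulSn addnA IH per. Qed.

Lemma per_mod (f : nat -> nat) n : (forall x, f (x + n) = f x) ->
  forall x, f x = f (x %% n).
Proof. move=> per x; by rewrite {1}(divn_eq x n) addnC per_mul. Qed.

Lemma prefix_rot (f : nat -> nat) n j B : (forall x, f (x + n) = f x) ->
  j <= n -> size B <= n -> (forall k, k < size B -> nth 0 B k = f (j + k)) ->
  prefix B (rot j (mkseq f n)).
Proof.
move=> per jn Bn hB; rewrite prefixE; apply/eqP.
have sz : size (take (size B) (rot j (mkseq f n))) = size B.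
  by rewrite size_takel // size_rot size_mkseq.
apply: (@eq_from_nth _ 0) => // k; rewrite sz => hk'.
by rewrite nth_take // nth_rot_mkseq //; [rewrite hB|lia].
Qed.

Lemma contains_of (f : nat -> nat) n j B : 0 < n -> (forall x, f (x + n) = f x) ->
  size B <= n -> (forall k, k < size B -> nth 0 B k = f (j + k)) ->
  cyc_contains (mkseq f n) B.
Proof.
move=> n0 per Bn hB; apply/hasP; exists (j %% n).
  by rewrite mem_iota size_mkseq add0n ltn_mod n0.
apply: prefix_rot => //; first by apply: ltnW; rewrite ltn_mod.
move=> k hk; rewrite hB // (@per_mod f n per (j + k)) (@per_mod f n per (j %% n + k)).
by rewrite modnDml.
Qed.

Lemma occ_ge3 (f : nat -> nat) n B j1 j2 j3 : (forall x, f (x + n) = f x) ->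
  size B <= n -> j1 < n -> j2 < n -> j3 < n -> j1 != j2 -> j1 != j3 -> j2 != j3 ->
  (forall k, k < size B -> nth 0 B k = f (j1 + k)) ->
  (forall k, k < size B -> nth 0 B k = f (j2 + k)) ->
  (forall k, k < size B -> nth 0 B k = f (j3 + k)) ->
  3 <= cyc_occ (mkseq f n) B.
Proof.
move=> per Bn h1 h2 h3 d12 d13 d23 e1 e2 e3.
rewrite /cyc_occ -size_filter size_mkseq.
have -> : 3 = size [:: j1; j2; j3] by [].
apply: uniq_leq_size; first by rewrite /= !inE negb_or d12 d13 d23.
move=> x; rewrite !inE mem_filter mem_iota add0n => /or3P[] /eqP ->; apply/andP; split;
  by [apply: prefix_rot => //; apply: ltnW | ].
Qed.

Lemma Cf_per a b x : 0 < a -> Cf a b (x + a) = Cf a b x + b.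
Proof.
move=> a0; rewrite /Cf /cdiv mulnDl (mulnC a b) -addnA (addnC (b * a)) addnA.
by rewrite divnDMl.
Qed.

Lemma lenf_per a b x : 0 < a -> lenf a b (x + a) = lenf a b x.
Proof. move=> a0; rewrite /lenf -addSn !Cf_per //; lia. Qed.

Lemma lenf_per2 a b x : 0 < a -> lenf a b (x + 2 * a) = lenf a b x.
Proof. by move=> a0; rewrite mul2n -addnn addnA !lenf_per. Qed.

Lemma sumn_take_lenf a b j k : 0 < a -> 
  sumn (mkseq (fun i => lenf a b (j + i)) k) = Cf a b (j + k) - Cf a b j.
Proof.
move=> a0; elim: k => [|k IH]; first by rewrite addn0 subnn.
rewrite -addn1 /mkseq iotaD map_cat sumn_cat -/(mkseq _ k) IH /= add0n addn0.
rewrite /lenf addn1 addnS.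
have := @Cf_mono a b j (j + k) a0 (leq_addr _ _).
have := @Cf_mono a b (j + k) (j + k).+1 a0 (leqnSn _).
lia.
Qed.

Local Open Scope ring_scope.

Lemma int_ident (A Tk K B T0 C Q R G : int) :
  T0 * B = (A - R) * (C * A - 1) -> G = Q * A + R ->
  A * (Tk + ((A - R) * C - 1 - Q)) - (T0 + K) * B = A * Tk - K * B - G.
Proof. move=> E1 E2; rewrite E2 (mulrDl T0) E1; ring. Qed.

Lemma nth_sumn_take (B : seq nat) k : (k < size B)%N ->
  nth 0%N B k = (sumn (take k.+1 B) - sumn (take k B))%N.
Proof. move=> hk; rewrite (take_nth 0%N) // sumn_rcons; lia. Qed.

Lemma occ_exists (a b : nat) (B : seq nat) (G : int) : (0 < a)%N -> (a <= b)%N -> coprime a b ->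
  (size B <= 2 * a)%N ->
  (forall k, (k <= size B)%N ->
     0 <= a%:Z * (sumn (take k B))%:Z - (k * b)%:Z - G < a%:Z) ->
  cyc_contains (mkseq (lenf a b) (2 * a)) B.
Proof.
move=> a0 ab cop sB hG.
have [t _ ht] := Bezoutl b a0.
move: ht; rewrite (eqP cop) => /dvdnP[c hc].
have anz : a%:Z != 0 by rewrite eqz_nat -lt0n.
set R := (G %% a%:Z)%Z; set Q := (G %/ a%:Z)%Z.
have R0 : 0 <= R by apply: modz_ge0.
have Ra : R < a%:Z by have := ltz_mod G anz.
have GE : G = Q * a%:Z + R by rewrite /Q /R -divz_eq.
set t0 := (t * (a - `|R|))%N.
have E1 : t0%:Z * b%:Z = (a%:Z - R) * (c%:Z * a%:Z - 1).
  rewrite -PoszM.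
  have hR : R = (`|R|%N)%:Z by rewrite gez0_abs.
  rewrite /t0 (mulnC t) -mulnA PoszM -(subzn (ltnW _)); last by rewrite -ltz_nat -hR.
  rewrite -hR -PoszM (_ : (c * a)%N = (1 + t * b)%N) // PoszD; ring.
set C0 := (a%:Z - R) * c%:Z - 1 - Q.
have key : forall k, (k <= size B)%N ->
    (Cf a b (t0 + k))%:Z = (sumn (take k B))%:Z + C0.
  move=> k hk.
  have := hG k hk.
  rewrite PoszM -(@int_ident a%:Z (sumn (take k B))%:Z k%:Z b%:Z t0%:Z c%:Z Q R G E1 GE).
  set X := _ + C0 => /andP[h1 h2].
  have X0 : 0 <= X by nia.
  have hX : X = (`|X|%N)%:Z by rewrite gez0_abs.
  rewrite hX; congr Posz; apply: cdiv_eq => //; nia.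
apply: (@contains_of _ _ t0) => //; first by lia.
  by move=> x; apply: lenf_per2.
move=> k hk.
rewrite nth_sumn_take // /lenf -addnS.
have k1 := key k.+1 hk; have k2 := key k (ltnW hk).
have : (Cf a b (t0 + k) <= Cf a b (t0 + k.+1))%N by apply: Cf_mono => //; lia.
have : (sumn (take k B) <= sumn (take k.+1 B))%N.
  by rewrite (take_nth 0%N) // sumn_rcons leq_addr.
lia.
Qed.

Local Close Scope ring_scope.

Definition cont (i : nat * nat) (l : seq nat) : nat * nat :=
  foldr (fun x pq => (pq.2, x * pq.2 + pq.1)) i l.
Definition cP l := (cont (0, 1) l).1.
Definition cQ l := (cont (0, 1) l).2.
Definition cP1 l := (cont (1, 0) l).1.
Definition cQ1 l := (cont (1, 0) l).2.

Lemma cont_lin x y l :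
  cont (x, y) l = (x * cP1 l + y * cP l, x * cQ1 l + y * cQ l).
Proof.
rewrite /cP1 /cP /cQ1 /cQ; elim: l => [|z l IH] /=; first by congr pair; lia.
rewrite IH /=; congr pair; ring.
Qed.

Lemma cP_rcons l t : cP (rcons l t) = cP1 l + t * cP l.
Proof. rewrite /cP /cont foldr_rcons -/(cont _ l) /= cont_lin /=; ring. Qed.
Lemma cQ_rcons l t : cQ (rcons l t) = cQ1 l + t * cQ l.
Proof. rewrite /cQ /cont foldr_rcons -/(cont _ l) /= cont_lin /=; ring. Qed.
Lemma cP1_rcons l t : cP1 (rcons l t) = cP l.
Proof. rewrite /cP1 /cont foldr_rcons -/(cont _ l) /= cont_lin /=; ring. Qed.
Lemma cQ1_rcons l t : cQ1 (rcons l t) = cQ l.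
Proof. rewrite /cQ1 /cont foldr_rcons -/(cont _ l) /= cont_lin /=; ring. Qed.

Lemma cont_det l :
  ((cP1 l)%:Z * (cQ l)%:Z - (cP l)%:Z * (cQ1 l)%:Z = (-1) ^+ size l)%R.
Proof.
rewrite /cP1 /cP /cQ1 /cQ; elim: l => [|x l IH] //=.
rewrite exprS -IH !PoszD !PoszM; ring.
Qed.

Lemma cQ_pos l : all (fun x => 0 < x) l -> 0 < cQ l.
Proof.
rewrite /cQ; elim: l => //= x l IH /andP[x0 /IH]; nia.
Qed.

Lemma cP_pos l : all (fun x => 0 < x) l -> l != [::] -> 0 < cP l.
Proof. case: l => // x l /= /andP[_ h] _; exact: cQ_pos. Qed.

Lemma cP_lt_cQ l : all (fun x => 0 < x) l -> l != [::] -> 2 <= last 0 l -> cP l < cQ l.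
Proof.
case: l => // x l /= /andP[x0 hl] _.
case: l hl => [|y l] hl /=.
  by rewrite /cP /cQ /=; lia.
move=> _.
have h1 := @cP_pos (y :: l) hl isT.
have h2 := @cQ_pos (y :: l) hl.
move: h1 h2; rewrite /cP /cQ /=; nia.
Qed.

Lemma cf_PQ l : all (fun x => 0 < x) l -> cf l = ((cP l)%:R / (cQ l)%:R)%R.
Proof.
elim: l => [|x l IH] /=; first by rewrite /cf /cP /= mul0r.
move=> /andP[x0 hl]; rewrite /cf /= -/(cf l) IH //.
have q0 := @cQ_pos l hl.
rewrite /cP /cQ /= -/(cP l) -/(cQ l).
have hq : ((cQ l)%:R != 0 :> rat)%R by rewrite pnatr_eq0 -lt0n.
have hx : ((x * cQ l + cP l)%:R != 0 :> rat)%R by rewrite pnatr_eq0 -lt0n; nia.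
rewrite natrD natrM in hx *.
move: hq hx; generalize (cP l) (cQ l) => p q hq hx; field; by rewrite hq hx.
Qed.

Definition th N b0 j := N * Cf N b0 j - j * b0.

Lemma th_eq N b0 j : 0 < N -> j * b0 + th N b0 j = N * Cf N b0 j /\ th N b0 j < N.
Proof.
move=> N0; have h1 := @cdiv_ge (j * b0) N N0; have h2 := @cdiv_lt (j * b0) N N0.
rewrite /th /Cf; split; lia.
Qed.

Lemma th_len N b0 j : 0 < N -> N * lenf N b0 j + th N b0 j = b0 + th N b0 j.+1.
Proof.
move=> N0; have [e1 _] := @th_eq N b0 j N0; have [e2 _] := @th_eq N b0 j.+1 N0.
have m := @Cf_mono N b0 j j.+1 N0 (leqnSn _).
rewrite /lenf; nia.
Qed.

Lemma th_per N b0 j : 0 < N -> th N b0 (j + N) = th N b0 j.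
Proof.
move=> N0; have [e1 _] := @th_eq N b0 j N0; have [e2 _] := @th_eq N b0 (j + N) N0.
rewrite Cf_per // in e2; nia.
Qed.

Lemma th_down N b0 l q j : 0 < N -> l * b0 = q * N + 1 -> 1 <= th N b0 j ->
  th N b0 (j + l) = (th N b0 j).-1.
Proof.
move=> N0 hl h; have [e1 t1] := @th_eq N b0 j N0.
have E : Cf N b0 (j + l) = Cf N b0 j + q.
  apply: cdiv_eq => //; nia.
rewrite /th E; nia.
Qed.

Lemma th_up N b0 l q j : 0 < N -> l * b0 = q * N + 1 -> l < N -> th N b0 j <= N - 2 ->
  th N b0 (j + (N - l)) = (th N b0 j).+1.
Proof.
move=> N0 hl lN h; have [e1 t1] := @th_eq N b0 j N0.
have qb : q < b0 by nia.
have E : Cf N b0 (j + (N - l)) = Cf N b0 j + (b0 - q).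
  apply: cdiv_eq => //; nia.
rewrite /th E; nia.
Qed.

Lemma th_zero_top N b0 l q j : 0 < N -> l * b0 = q * N + 1 -> th N b0 j = 0 ->
  th N b0 (j + l) = N.-1.
Proof.
move=> N0 hl h; have [e1 t1] := @th_eq N b0 j N0.
have E : Cf N b0 (j + l) = Cf N b0 j + q.+1.
  apply: cdiv_eq => //; nia.
rewrite /th E; nia.
Qed.

Lemma th_inj N b0 l q z z' : 0 < N -> l * b0 = q * N + 1 ->
  z < z' < z + N -> th N b0 z = th N b0 z' -> False.
Proof.
move=> N0 hl /andP[h1 h2] e.
have [e1 _] := @th_eq N b0 z N0; have [e2 _] := @th_eq N b0 z' N0.
have m := @Cf_mono N b0 z z' N0 (ltnW h1).
have d : N %| (z' - z) * b0.
  apply/dvdnP; exists (Cf N b0 z' - Cf N b0 z); nia.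
have d2 : N %| (z' - z) * q * N + (z' - z).
  have -> : (z' - z) * q * N + (z' - z) = (z' - z) * b0 * l by nia.
  by apply: dvdn_mulr.
rewrite dvdn_addr in d2; last by apply: dvdn_mull.
have := dvdn_leq _ d2; lia.
Qed.

Lemma th_zero_dvd N b0 l q z : 0 < N -> l * b0 = q * N + 1 -> th N b0 z = 0 -> N %| z.
Proof.
move=> N0 hl e; have [e1 _] := @th_eq N b0 z N0.
have d2 : N %| z * q * N + z.
  have -> : z * q * N + z = z * b0 * l by nia.
  by apply: dvdn_mulr; apply/dvdnP; exists (Cf N b0 z); lia.
by rewrite dvdn_addr in d2; last by apply: dvdn_mull.
Qed.

Lemma shift_occ N b0 (S : seq nat) i s : 0 < N -> i < 2 * N -> 0 < s < N ->
  size S <= 2 * N ->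
  (forall k, k < size S -> nth 0 S k = lenf N b0 (i + k)) ->
  (forall k, k < size S -> lenf N b0 (i + s + k) = lenf N b0 (i + k)) ->
  3 <= cyc_occ (mkseq (lenf N b0) (2 * N)) S.
Proof.
move=> N0 iN /andP[s0 sN] sS hS hs.
have per : forall x, lenf N b0 (x + 2 * N) = lenf N b0 x by move=> x; apply: lenf_per2.
apply: (@occ_ge3 _ _ _ i (if i < N then i + N else i - N)
          (if i + s < 2 * N then i + s else i + s - 2 * N)) => //.
- by case: ifP; lia.
- by case: ifP; lia.
- by case: ifP; lia.
- by case: ifP; lia.
- by case: ifP; case: ifP; lia.
- move=> k hk; rewrite hS //; case: ifP => h.
    by rewrite -addnA (addnC N) addnA lenf_per.
  rewrite -[in RHS](@lenf_per N b0 (i - N + k)) //; congr lenf; lia.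
- move=> k hk; rewrite hS // -hs //; case: ifP => h //.
  rewrite -[in RHS]per; congr lenf; lia.
Qed.

Lemma win_zero N b0 l q (S : seq nat) i : 0 < N -> l * b0 = q * N + 1 -> 0 < l < N ->
  i < 2 * N -> size S <= 2 * N ->
  (forall k, k < size S -> nth 0 S k = lenf N b0 (i + k)) ->
  cyc_occ (mkseq (lenf N b0) (2 * N)) S = 2 ->
  exists k, k <= size S /\ th N b0 (i + k) = 0.
Proof.
move=> N0 hl hl0 iN sS hS occ2.
case: (boolP (has (fun k => th N b0 (i + k) == 0) (iota 0 (size S).+1))).
  move=> /hasP[k]; rewrite mem_iota add0n => kS /eqP e; exists k; split => //; lia.
move=> /hasPn H; exfalso.
have H' : forall k, k <= size S -> 1 <= th N b0 (i + k).
  move=> k hk; have := H k; rewrite mem_iota add0n ltnS hk => /(_ isT); lia.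
suff : 3 <= cyc_occ (mkseq (lenf N b0) (2 * N)) S by rewrite occ2.
apply: (@shift_occ N b0 S i l N0 iN hl0 sS hS).
move=> k hk; apply/eqP; rewrite -(eqn_pmul2l N0); apply/eqP.
have t1 := @th_len N b0 (i + l + k) N0; have t2 := @th_len N b0 (i + k) N0.
have d1 : th N b0 (i + l + k) = (th N b0 (i + k)).-1.
  by rewrite (addnAC i l k); apply: th_down hl (H' k (ltnW hk)).
have d2 : th N b0 (i + l + k).+1 = (th N b0 (i + k).+1).-1.
  have e : (i + l + k).+1 = (i + k.+1) + l by lia.
  rewrite e (@th_down N b0 l q (i + k.+1) N0 hl); first by rewrite addnS.
  exact: H'.
have h1 := H' k (ltnW hk); have h2 := H' k.+1 hk; rewrite addnS in h2.
lia.
Qed.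

Lemma win_top N b0 l q (S : seq nat) i : 0 < N -> l * b0 = q * N + 1 -> 0 < l < N ->
  i < 2 * N -> size S <= 2 * N ->
  (forall k, k < size S -> nth 0 S k = lenf N b0 (i + k)) ->
  cyc_occ (mkseq (lenf N b0) (2 * N)) S = 2 ->
  exists k, k <= size S /\ th N b0 (i + k) = N.-1.
Proof.
move=> N0 hl hl0 iN sS hS occ2.
case: (boolP (has (fun k => th N b0 (i + k) == N.-1) (iota 0 (size S).+1))).
  move=> /hasP[k]; rewrite mem_iota add0n => kS /eqP e; exists k; split => //; lia.
move=> /hasPn H; exfalso.
have H' : forall k, k <= size S -> th N b0 (i + k) <= N - 2.
  move=> k hk; have := H k; rewrite mem_iota add0n ltnS hk => /(_ isT).
  have [_ t] := @th_eq N b0 (i + k) N0; lia.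
have lN : l < N by lia.
suff : 3 <= cyc_occ (mkseq (lenf N b0) (2 * N)) S by rewrite occ2.
apply: (@shift_occ N b0 S i (N - l) N0 iN _ sS hS); first by lia.
move=> k hk; apply/eqP; rewrite -(eqn_pmul2l N0); apply/eqP.
have t1 := @th_len N b0 (i + (N - l) + k) N0; have t2 := @th_len N b0 (i + k) N0.
have d1 : th N b0 (i + (N - l) + k) = (th N b0 (i + k)).+1.
  by rewrite (addnAC i (N - l) k); apply: (@th_up N b0 l q) => //; apply: H'; lia.
have d2 : th N b0 (i + (N - l) + k).+1 = (th N b0 (i + k).+1).+1.
  have e : (i + (N - l) + k).+1 = (i + k.+1) + (N - l) by lia.
  rewrite e (@th_up N b0 l q (i + k.+1) N0 hl lN); first by rewrite addnS.
  exact: H'.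
lia.
Qed.

Lemma th_per2 N b0 x : 0 < N -> th N b0 (x + 2 * N) = th N b0 x.
Proof. by move=> N0; rewrite mul2n -addnn addnA !th_per. Qed.

Lemma ident N b0 l q i (S1 S2 : seq nat) : 1 < N -> l * b0 = q * N + 1 -> 0 < l < N ->
  rot i (mkseq (lenf N b0) (2 * N)) = S1 ++ S2 ++ S1 ++ S2 ->
  cyc_occ (mkseq (lenf N b0) (2 * N)) S1 = 2 ->
  cyc_occ (mkseq (lenf N b0) (2 * N)) S2 = 2 ->
  head 0 S1 = (b0 %/ N).+1 -> S1 != [::] -> S2 != [::] ->
  size S1 = l /\ S1 ++ S2 = mkseq (lenf N b0) N.
Proof.
move=> N1 hl hl0 Erot occ1 occ2 hd ne1 ne2.
have N0 : 0 < N by lia.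
set CS := mkseq _ _ in Erot occ1 occ2.
have per2 : forall x, lenf N b0 (x + 2 * N) = lenf N b0 x by move=> x; apply: lenf_per2.
have tper2 : forall x, th N b0 (x + 2 * N) = th N b0 x by move=> x; apply: th_per2.
have sz : size S1 + size S2 = N.
  have := congr1 size Erot; rewrite size_rot size_mkseq !size_cat; lia.
have s1 : 0 < size S1 by case: S1 ne1 {Erot occ1 hd sz}.
have s2 : 0 < size S2 by case: S2 ne2 {Erot occ2 sz}.
pose i' := if i < 2 * N then i else 0.
have i'N : i' < 2 * N by rewrite /i'; case: ifP => //; lia.
have Ei : rot i' CS = S1 ++ S2 ++ S1 ++ S2.
  rewrite /i'; case: ifP => // h; rewrite rot0 -Erot rot_oversize //.
  by rewrite size_mkseq; lia.
have nthR : forall k, k < 2 * N -> nth 0 (S1 ++ S2 ++ S1 ++ S2) k = lenf N b0 (i' + k).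
  by move=> k hk; rewrite -Ei nth_rot_mkseq //; lia.
have hS1 : forall k, k < size S1 -> nth 0 S1 k = lenf N b0 (i' + k).
  by move=> k hk; rewrite -nthR ?nth_cat ?hk //; lia.
have hS2 : forall k, k < size S2 -> nth 0 S2 k = lenf N b0 (i' + size S1 + k).
  move=> k hk; rewrite -addnA -nthR; last lia.
  by rewrite nth_cat ltnNge leq_addr /= addKn nth_cat hk.
have sS1 : size S1 <= 2 * N by lia.
have sS2 : size S2 <= 2 * N by lia.
pose i2 := (i' + size S1) %% (2 * N).
have i2N : i2 < 2 * N by rewrite ltn_mod; lia.
have Li2 : forall k, lenf N b0 (i2 + k) = lenf N b0 (i' + size S1 + k).
  move=> k; rewrite (@per_mod _ _ per2 (i2 + k)) (@per_mod _ _ per2 (i' + size S1 + k)).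
  by rewrite /i2 modnDml.
have Ti2 : forall k, th N b0 (i2 + k) = th N b0 (i' + size S1 + k).
  move=> k; rewrite (@per_mod _ _ tper2 (i2 + k)) (@per_mod _ _ tper2 (i' + size S1 + k)).
  by rewrite /i2 modnDml.
have [k1 [hk1 z1]] := @win_zero N b0 l q S1 i' N0 hl hl0 i'N sS1 hS1 occ1.
have [k2 [hk2 z2]] : exists k, k <= size S2 /\ th N b0 (i' + size S1 + k) = 0.
  have [k [hk e]] := @win_zero N b0 l q S2 i2 N0 hl hl0 i2N sS2
    (fun k hk => etrans (hS2 k hk) (esym (Li2 k))) occ2.
  by exists k; rewrite -Ti2.
have [y1 [hy1 w1]] := @win_top N b0 l q S1 i' N0 hl hl0 i'N sS1 hS1 occ1.
have [y2 [hy2 w2]] : exists k, k <= size S2 /\ th N b0 (i' + size S1 + k) = N.-1.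
  have [k [hk e]] := @win_top N b0 l q S2 i2 N0 hl hl0 i2N sS2
    (fun k hk => etrans (hS2 k hk) (esym (Li2 k))) occ2.
  by exists k; rewrite -Ti2.
set l1 := size S1 in hk1 hk2 z2 w2 hy1 hy2 sz hS1 hS2 s1.
have inj := @th_inj N b0 l q.
have A : th N b0 i' = 0 \/ th N b0 (i' + l1) = 0.
  case: (ltngtP (i' + k1) (i' + l1 + k2)) => h.
  - case: (ltnP (i' + l1 + k2) (i' + k1 + N)) => h2.
      by exfalso; apply: (inj (i' + k1) (i' + l1 + k2) N0 hl); [lia|rewrite z1 z2].
    have e0 : k1 = 0 by lia.
    by left; rewrite e0 addn0 in z1.
  - lia.
  - have e0 : k1 = l1 by lia.
    by right; rewrite -e0.
have B : th N b0 i' = N.-1 \/ th N b0 (i' + l1) = N.-1.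
  case: (ltngtP (i' + y1) (i' + l1 + y2)) => h.
  - case: (ltnP (i' + l1 + y2) (i' + y1 + N)) => h2.
      by exfalso; apply: (inj (i' + y1) (i' + l1 + y2) N0 hl); [lia|rewrite w1 w2].
    have e0 : y1 = 0 by lia.
    by left; rewrite e0 addn0 in w1.
  - lia.
  - have e0 : y1 = l1 by lia.
    by right; rewrite -e0.
have headc : th N b0 i' = N.-1 -> False.
  move=> e; have := @th_len N b0 i' N0; have [_ t] := @th_eq N b0 i'.+1 N0.
  have : head 0 S1 = lenf N b0 i'.
    by rewrite -nth0 hS1 // addn0.
  rewrite hd => e2; rewrite -e2 e => e3.
  have : (b0 %/ N).+1 * N <= b0 by lia.
  by rewrite -leq_divRL // ltnn.
case: A => [A1|A2]; last first.
  case: B => [B1|B2]; first by case: (headc B1).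
  by move: A2; rewrite B2; lia.
case: B => [B1|B2]; first by move: A1; rewrite B1; lia.
have T := @th_zero_top N b0 l q i' N0 hl A1.
have el : l1 = l.
  case: (ltngtP l1 l) => h //; exfalso.
    by apply: (inj (i' + l1) (i' + l) N0 hl); [lia|rewrite B2 T].
  by apply: (inj (i' + l) (i' + l1) N0 hl); [lia|rewrite B2 T].
split => //.
have /dvdnP[j ej] := @th_zero_dvd N b0 l q i' N0 hl A1.
apply: (@eq_from_nth _ 0); first by rewrite size_cat size_mkseq.
move=> k; rewrite size_cat => hk.
rewrite nth_mkseq; last lia.
have := nthR k; rewrite catA nth_cat size_cat hk => -> ; last lia.
by rewrite ej addnC (@per_mul _ _ (fun x => @lenf_per N b0 x N0)).
Qed.

Lemma mkseq_add (f : nat -> nat) m n :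
  mkseq f (m + n) = mkseq f m ++ mkseq (fun i => f (m + i)) n.
Proof. by rewrite /mkseq iotaD map_cat add0n -(addn0 m) iotaDl -map_comp addn0. Qed.

Lemma take_mkseq' (f : nat -> nat) k n : k <= n -> take k (mkseq f n) = mkseq f k.
Proof.
move=> kn; rewrite -(subnKC kn) mkseq_add take_size_cat //.
by rewrite size_mkseq.
Qed.

Lemma flatten_nseqS (W : seq nat) j : flatten (nseq j.+1 W) = flatten (nseq j W) ++ W.
Proof.
elim: j => [|j IH]; first by rewrite /= cats0.
change (W ++ flatten (nseq j.+1 W) = flatten (nseq j.+1 W) ++ W).
by rewrite {1}IH catA.
Qed.

Lemma flatten_per (f : nat -> nat) N : (forall x, f (x + N) = f x) ->
  forall j x, mkseq f (j * N + x) = flatten (nseq j (mkseq f N)) ++ mkseq f x.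
Proof.
move=> per; elim=> [|j IH] x //=.
rewrite mulSn -addnA mkseq_add -catA -IH.
congr (_ ++ _); apply: eq_mkseq => i; by rewrite addnC per.
Qed.

Lemma dpair_shift (X Y : seq nat) d : X ++ dpair d Y X = dpair d X Y ++ X.
Proof.
rewrite /dpair; elim: d => [|d IH] /=; first by rewrite cats0.
by rewrite -!catA -IH.
Qed.

Lemma blockU (f : nat -> nat) N (X Y : seq nat) d : (forall x, f (x + N) = f x) ->
  X ++ Y = mkseq f N ->
  X ++ dpair d Y X ++ Y ++ X = mkseq f ((d + 1) * N + size X).
Proof.
move=> per E.
have sX : size X <= N by rewrite -(size_mkseq f N) -E size_cat leq_addr.
have EX : X = mkseq f (size X).
  by rewrite -(@take_mkseq' f (size X) N sX) -E take_size_cat.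
rewrite catA dpair_shift -catA (catA X Y X) E (@flatten_per f N per) addn1 flatten_nseqS -EX /dpair E.
by rewrite catA.
Qed.

Lemma sum_take_mkseq (f : nat -> nat) k L : k <= L ->
  sumn (take k (mkseq f L)) = sumn (mkseq f k).
Proof. by move=> kL; rewrite take_mkseq'. Qed.

Local Open Scope ring_scope.
Lemma sum_mod (x y x' y' : nat) (M : seq nat) k : (k <= size M + 2)%N ->
  (sumn (take k (x' :: M ++ [:: y'])))%:Z =
  ((sumn (take k (x :: M ++ [:: y])))%:Z + (x'%:Z - x%:Z) * (0 < k)%N%:Z
   + (y'%:Z - y%:Z) * (k == size M + 2)%N%:Z)%R.
Proof.
case: k => [|k] hk.
  rewrite (_ : (0 == size M + 2)%N = false); last by rewrite addn2.
  by rewrite /= !mulr0 !addr0.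
rewrite /= mulr1.
case: (ltnP k (size M).+1) => h.
  have e : (k.+1 == size M + 2)%N = false by apply/negbTE; lia.
  rewrite e mulr0 addr0.
  rewrite !take_cat.
  case: ltnP => h2.
    rewrite !PoszD; ring.
  have ek : k = size M by lia.
  rewrite ek subnn /= !PoszD; ring.
have ek : k = (size M).+1 by lia.
rewrite ek addn2 eqxx.
rewrite mulr1.
rewrite !take_oversize ?size_cat /= ?addn1 //.
rewrite !sumn_cat /= !PoszD; ring.
Qed.

Local Close Scope ring_scope.
Local Open Scope ring_scope.

Lemma core_mid (N b0 l q a b u v d L k C t : int) :
  2 <= N -> 1 <= l -> l < N -> l * b0 = q * N + 1 -> a = u * N + v * l ->
  N * b + v = b0 * a -> 1 <= u -> 1 <= v -> 1 <= d -> (d - 1) * v < u -> u < (d + 1) * v ->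
  L = (d + 1) * N + l -> 1 <= k -> k <= L - 1 -> N * C = k * b0 + t -> 0 <= t -> t < N ->
  v - a <= a * (C - 1) - k * b /\ a * (C - 1) - k * b < v /\ a * (C - 1) - k * b < (d + 1) * v - u.
Proof.
move=> N2 l1 lN hl ha hb u1 v1 d1 hd1 hd2 hL k1 kL hC t0 tN.
set w := l * C - k * q.
have Ew : N * w = l * t + k.
  have -> : N * w = l * (N * C) - k * (q * N) by rewrite /w; ring.
  rewrite hC (_ : q * N = l * b0 - 1); last by rewrite hl; ring.
  ring.
have Eg : N * (a * (C - 1) - k * b) = N * (u * t + v * w - a).
  have -> : N * (a * (C - 1) - k * b) = a * (N * C) - N * a - k * (N * b) by ring.
  rewrite hC (_ : N * b = b0 * a - v); last by rewrite -hb; ring.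
  have -> : N * (u * t + v * w - a) = N * u * t + v * (N * w) - N * a by ring.
  rewrite Ew ha; ring.
have N0 : N != 0 by apply/eqP => e; rewrite e in N2.
have -> : a * (C - 1) - k * b = u * t + v * w - a by apply: (mulfI N0).
have lt0 : 0 <= l * t by apply: mulr_ge0; lia.
have w1 : 1 <= w.
  have : 0 < N * w by rewrite Ew; lia.
  rewrite pmulr_rgt0; [lia|lia].
have ltN : l * t <= l * (N - 1) by rewrite ler_pM2l; lia.
have w2 : w <= l + d.
  have : N * w < N * (l + d + 1) by rewrite Ew; lia.
  rewrite ltr_pM2l; [lia|lia].
have h1 : 0 <= u * t by apply: mulr_ge0; lia.
have h2 : u * t <= u * (N - 1) by rewrite ler_pM2l; lia.
have h3 : v <= v * w by rewrite -{1}(mulr1 v) ler_pM2l; lia.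
have h4 : v * w <= v * (l + d) by rewrite ler_pM2l; lia.
split; first by lia.
split; lia.
Qed.

Lemma core_end (N b0 l q a b u v d L C : int) :
  2 <= N -> 1 <= l -> l * b0 = q * N + 1 -> a = u * N + v * l ->
  N * b + v = b0 * a -> 1 <= u -> 1 <= v -> (d - 1) * v < u -> u < (d + 1) * v ->
  L = (d + 1) * N + l -> N * C = L * b0 + (N - 1) ->
  a * (C - 2) - L * b = (d + 1) * v - u - a /\ a * (C - 2) - L * b < v /\ a * (C - 2) - L * b < (d + 1) * v - u.
Proof.
move=> N2 l1 hl ha hb u1 v1 hd1 hd2 hL hC.
have Eg : N * (a * (C - 2) - L * b) = N * ((d + 1) * v - u - a).
  have -> : N * (a * (C - 2) - L * b) = a * (N * C) - 2 * N * a - L * (N * b) by ring.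
  rewrite hC (_ : N * b = b0 * a - v); last by rewrite -hb; ring.
  rewrite hL ha; ring.
have N0 : N != 0 by apply/eqP => e; rewrite e in N2.
have -> : a * (C - 2) - L * b = (d + 1) * v - u - a by apply: (mulfI N0).
have h1 : v <= v * l by rewrite -{1}(mulr1 v) ler_pM2l; lia.
have h2 : 0 < u * N by apply: mulr_gt0; lia.
lia.
Qed.

Lemma core_mid_odd (N b0 l q a b u v d L k C C0 t P : int) :
  2 <= N -> 1 <= l -> l < N -> l * b0 = q * N + 1 -> P = N - l -> a = u * N + v * P ->
  N * b = b0 * a + v -> 1 <= u -> 1 <= v -> 1 <= d -> (d - 1) * v < u -> u < (d + 1) * v ->
  L = (d + 1) * N + P -> 1 <= k -> k <= L - 1 -> N * C = (l + k) * b0 + t -> 0 <= t -> t < N ->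
  C0 = q + 1 ->
  v - a <= - (a * (C - C0 + 1) - k * b) /\ - (a * (C - C0 + 1) - k * b) < v /\
  - (a * (C - C0 + 1) - k * b) < (d + 1) * v - u.
Proof.
move=> N2 l1 lN hl hP ha hb u1 v1 d1 hd1 hd2 hL k1 kL hC t0 tN hC0.
set m := N - 1 - t.
set w := N - 1 - t - l + l * C - (l + k) * q.
have Ew : N * w = k + P * m.
  have -> : N * w = N * (N - 1 - t - l) + l * (N * C) - (l + k) * (q * N) by rewrite /w; ring.
  rewrite hC (_ : q * N = l * b0 - 1); last by rewrite hl; ring.
  rewrite hP /m; ring.
have Eg : N * (a * (C - C0 + 1) - k * b) = N * (a - u * m - v * w).
  have -> : N * (a * (C - C0 + 1) - k * b) = a * (N * C) - a * N * q - k * (N * b) by rewrite hC0; ring.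
  rewrite hC hb.
  have -> : N * (a - u * m - v * w) = N * a - N * u * m - v * (N * w) by ring.
  rewrite Ew ha /m hP.
  have -> : (l + k) * b0 = l * b0 + k * b0 by ring.
  rewrite hl; ring.
have N0 : N != 0 by apply/eqP => e; rewrite e in N2.
have -> : a * (C - C0 + 1) - k * b = a - u * m - v * w by apply: (mulfI N0).
have m0 : 0 <= m by rewrite /m; lia.
have mN : m <= N - 1 by rewrite /m; lia.
have P1 : 1 <= P by lia.
have lt0 : 0 <= P * m by apply: mulr_ge0; lia.
have w1 : 1 <= w.
  have : 0 < N * w by rewrite Ew; lia.
  rewrite pmulr_rgt0; [lia|lia].
have ltN : P * m <= P * (N - 1) by rewrite ler_pM2l; lia.
have w2 : w <= P + d.
  have : N * w < N * (P + d + 1) by rewrite Ew; lia.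
  rewrite ltr_pM2l; [lia|lia].
have h1 : 0 <= u * m by apply: mulr_ge0; lia.
have h2 : u * m <= u * (N - 1) by rewrite ler_pM2l; lia.
have h3 : v <= v * w by rewrite -{1}(mulr1 v) ler_pM2l; lia.
have h4 : v * w <= v * (P + d) by rewrite ler_pM2l; lia.
split; first by lia.
split; lia.
Qed.

Lemma core_end_odd (N b0 l q a b u v d L C C0 P : int) :
  2 <= N -> 1 <= l -> l < N -> l * b0 = q * N + 1 -> P = N - l -> a = u * N + v * P ->
  N * b = b0 * a + v -> 1 <= u -> 1 <= v -> (d - 1) * v < u -> u < (d + 1) * v ->
  L = (d + 1) * N + P -> N * C = (l + L) * b0 -> C0 = q + 1 ->
  - (a * (C - C0 + 2) - L * b) = (d + 1) * v - u - a /\ - (a * (C - C0 + 2) - L * b) < v /\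
  - (a * (C - C0 + 2) - L * b) < (d + 1) * v - u.
Proof.
move=> N2 l1 lN hl hP ha hb u1 v1 hd1 hd2 hL hC hC0.
have Eg : N * (a * (C - C0 + 2) - L * b) = N * (a + u - (d + 1) * v).
  have -> : N * (a * (C - C0 + 2) - L * b) = a * (N * C) - a * N * q + a * N - L * (N * b) by rewrite hC0; ring.
  rewrite hC hb.
  have -> : (l + L) * b0 = l * b0 + L * b0 by ring.
  rewrite hl hL ha hP; ring.
have N0 : N != 0 by apply/eqP => e; rewrite e in N2.
have -> : a * (C - C0 + 2) - L * b = a + u - (d + 1) * v by apply: (mulfI N0).
have P1 : 1 <= P by lia.
have h1 : v <= v * P by rewrite -{1}(mulr1 v) ler_pM2l; lia.
have h2 : 0 < u * N by apply: mulr_gt0; lia.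
lia.
Qed.

Local Close Scope ring_scope.

Lemma num_den_pos (s : rat) : (0 < s < 1)%R ->
  0 < `|numq s|%N /\ `|numq s|%N < `|denq s|%N /\
  s = ((`|numq s|%N)%:R / (`|denq s|%N)%:R)%R.
Proof.
move=> /andP[s0 s1].
have hn : (0 < numq s)%R by rewrite numq_gt0.
have hd : (0 < denq s)%R by [].
have hlt : (numq s < denq s)%R.
  have : (s * (denq s)%:~R < (denq s)%:~R)%R by rewrite gtr_pMl // ltr0z.
  by rewrite -numqE ltr_int.
have E := divq_num_den s.
have en : numq s = Posz `|numq s|%N by rewrite gez0_abs // ltW.
have ed : denq s = Posz `|denq s|%N by rewrite gez0_abs // ltW.
rewrite en ed in E hlt hn.
split; first by rewrite -ltz_nat.
split; first by rewrite -ltz_nat.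
by rewrite -[in LHS]E.
Qed.

Lemma ltq_frac_nat (x y z w : nat) : 0 < y -> 0 < w ->
  ((x%:R / y%:R : rat) < z%:R / w%:R)%R = (x * w < z * y).
Proof.
move=> y0 w0; rewrite ltr_pdivrMr ?ltr0n // mulrAC ltr_pdivlMr ?ltr0n //.
by rewrite -!natrM ltr_nat.
Qed.

Lemma cP_le_cQ l : all (fun x => 0 < x) l -> cP l <= cQ l.
Proof.
case: l => [|x l] //= /andP[x0 hl].
rewrite /cP /cQ /=; nia.
Qed.

Lemma coprime_of l b0 q N : l * b0 = q * N + 1 -> coprime N b0.
Proof.
move=> hl; rewrite /coprime -dvdn1.
have g1 : gcdn N b0 %| l * b0 by apply: dvdn_mull; apply: dvdn_gcdr.
have g2 : gcdn N b0 %| q * N by apply: dvdn_mull; apply: dvdn_gcdl.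
by rewrite hl dvdn_addr in g1.
Qed.

Lemma choose_d (u v n : nat) : 0 < u -> 0 < v -> 1 < n -> u < (2 * n - 2) * v ->
  exists d, [/\ 1 <= d <= 2 * n - 3, (d - 1) * v < u, u < (d + 1) * v & d + 1 <= 2 * u].
Proof.
move=> u0 v0 n1 huv.
case: (ltnP u v) => h.
  exists 1; split => //; lia.
exists (u %/ v); split.
- apply/andP; split; first by rewrite leq_divRL // mul1n.
  have : u %/ v < 2 * n - 2 by rewrite ltn_divLR.
  lia.
- have := leq_trunc_div u v; nia.
- by rewrite addn1; apply: ltn_ceil.
- have := leq_div u v; lia.
Qed.

Lemma even_case N b0 P' Q' n (S1 S2 : seq nat) m (s : rat) S1e S1b :
  1 < N -> 0 < P' -> P' < N -> 0 < Q' -> P' <= Q' -> P' * b0 = Q' * N + 1 -> 1 < n ->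
  size S1 = P' -> S1 ++ S2 = mkseq (lenf N b0) N ->
  m.+1 :: S1e = S1 -> rcons S1b m.+1 = S1 ->
  ((P' + (2 * n - 2) * N)%:R / (Q' + (2 * n - 2) * b0)%:R < s < P'%:R / Q'%:R)%R ->
  exists d, (1 <= d <= 2 * n - 3) /\
    cyc_contains (CS s) (m :: S1e ++ dpair d S2 S1 ++ S2 ++ S1b ++ [:: m]).
Proof.
move=> N1 P0 PN Q0 PQ hdet n1 sS1 ES E1 E2 /andP[hs1 hs2].
set t := 2 * n - 2.
have N0 : 0 < N by lia.
have s0 : (0 < s)%R.
  apply: le_lt_trans hs1; apply: divr_ge0; exact: ler0n.
have s1 : (s < 1)%R.
  apply: (lt_le_trans hs2); rewrite ler_pdivrMr ?ltr0n // mul1r ler_nat //.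
have [a0 [ab Es]] := @num_den_pos s (introT andP (conj s0 s1)).
set a := `|numq s|%N in a0 ab Es; set b := `|denq s|%N in ab Es.
rewrite Es in hs1 hs2.
rewrite ltq_frac_nat in hs1; last 2 first.
  by rewrite addn_gt0 Q0.
  by lia.
rewrite ltq_frac_nat in hs2; try lia.
have hv : b * N < a * b0.
  rewrite ltnNge; apply/negP => hle.
  have : t * (a * b0) <= t * (b * N) by rewrite leq_mul2l hle orbT.
  nia.
set un := P' * b - a * Q'.
set vn := a * b0 - b * N.
have un0 : 0 < un by rewrite /un; lia.
have vn0 : 0 < vn by rewrite /vn; lia.
have huv : un < t * vn.
  have : t * vn = t * (a * b0) - t * (b * N) by rewrite /vn mulnBr.
  rewrite /un; nia.
have Ea : a = un * N + vn * P'.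
  apply/eqP; rewrite -eqz_nat PoszD !PoszM /un /vn -!subzn; [|lia|lia].
  apply/eqP.
  have hd : (P'%:Z * b0%:Z = Q'%:Z * N%:Z + 1)%R by rewrite -!PoszM -PoszD hdet.
  have -> : (((P' * b)%N%:Z - (a * Q')%N%:Z) * N%:Z + ((a * b0)%N%:Z - (b * N)%N%:Z) * P'%:Z
     = a%:Z * (P'%:Z * b0%:Z - Q'%:Z * N%:Z))%R by rewrite !PoszM; ring.
  by rewrite hd; ring.
have Eb : N * b + vn = b0 * a by rewrite /vn; lia.
have [d [hd1 hd2 hd3 hd4]] := @choose_d un vn n un0 vn0 n1 huv.
exists d; split => //.
have hd2n : d * vn < un + vn.
  have : (d - 1) * vn = d * vn - vn by rewrite mulnBl mul1n.
  have : vn <= d * vn by rewrite -{1}(mul1n vn) leq_mul2r; lia.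
  lia.
set L := (d + 1) * N + P'.
have per : forall x, lenf N b0 (x + N) = lenf N b0 x by move=> x; apply: lenf_per.
have hU : S1 ++ dpair d S2 S1 ++ S2 ++ S1 = mkseq (lenf N b0) L.
  by rewrite /L -sS1; apply: blockU.
set M := S1e ++ dpair d S2 S1 ++ S2 ++ S1b.
have EU : m.+1 :: M ++ [:: m.+1] = mkseq (lenf N b0) L.
  by rewrite -hU /M -!catA cats1 E2 -cat_cons E1.
have EB : m :: S1e ++ dpair d S2 S1 ++ S2 ++ S1b ++ [:: m] = m :: M ++ [:: m].
  by rewrite /M -!catA.
have sM : size M + 2 = L.
  by have := congr1 size EU; rewrite size_mkseq /= size_cat /= addn1 addn2.
rewrite EB CS_formula; last by rewrite s0 s1.
have cop : coprime a b by apply: coprime_num_den.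
set u := Posz un; set v := Posz vn.
pose G := (if (un <= d * vn)%N then v - a%:Z else (d%:Z + 1) * v - u - a%:Z)%R.
have hG1 : (G <= v - a%:Z)%R by rewrite /G; case: ifP => h; lia.
have hG2 : (G <= (d%:Z + 1) * v - u - a%:Z)%R by rewrite /G; case: ifP => h; lia.
have hG3 : (G = v - a%:Z \/ G = (d%:Z + 1) * v - u - a%:Z)%R by rewrite /G; case: ifP => h; [left|right].
apply: (@occ_exists a b _ G) => //; first by lia.
  rewrite /= size_cat /= addn1 -addn2 sM /L Ea.
  have : (d + 1) * N <= 2 * un * N by rewrite leq_mul2r; lia.
  have : P' <= 2 * vn * P' by rewrite -{1}(mul1n P') leq_mul2r; lia.
  lia.
move=> k; rewrite /= size_cat /= -addn1 -addnA (_ : 1 + 1 = 2) // sM => hk.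
have Tk : Posz (sumn (take k (m :: M ++ [:: m]))) =
    (Posz (Cf N b0 k) - Posz (0 < k)%N - Posz (k == L)%N)%R.
  rewrite (@sum_mod m.+1 m.+1 m m M k); last by rewrite sM.
  rewrite EU sum_take_mkseq //.
  have := @sumn_take_lenf N b0 0 k N0.
  rewrite Cf0 // subn0 add0n (@eq_mkseq _ _ (lenf N b0)) // => ->.
  rewrite sM; lia.
rewrite Tk.
have [te tl] := @th_eq N b0 k N0.
have hdz : (P'%:Z * b0%:Z = Q'%:Z * N%:Z + 1)%R by lia.
case: (posnP k) => [k0|kpos].
  rewrite k0 /= (_ : (0 == L) = false); last by lia.
  rewrite Cf0 //.
  have : (v <= a%:Z)%R.
    have : vn <= vn * P' by rewrite -{1}(muln1 vn) leq_mul2l; lia.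
    lia.
  lia.
case: (eqVneq k L) => [kL|kL].
  rewrite kL.
  have CL : Cf N b0 L = (d + 1) * b0 + Q' + 1.
    have e : L * b0 = (d + 1) * b0 * N + Q' * N + 1.
      by rewrite /L mulnDl hdet (mulnAC (d + 1)) addnA.
    apply: cdiv_eq => //; rewrite e !mulnDl; lia.
  have [c1 [c2 c3]] := @core_end N%:Z b0%:Z P'%:Z Q'%:Z a%:Z b%:Z u v d%:Z L%:Z (Cf N b0 L)%:Z
    ltac:(lia) ltac:(lia) hdz ltac:(lia) ltac:(lia) ltac:(lia) ltac:(lia) ltac:(lia) ltac:(lia)
    ltac:(lia) ltac:(rewrite CL; lia).
  lia.
have [c1 [c2 c3]] := @core_mid N%:Z b0%:Z P'%:Z Q'%:Z a%:Z b%:Z u v d%:Z L%:Z k%:Z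
    (Cf N b0 k)%:Z (th N b0 k)%:Z
    ltac:(lia) ltac:(lia) ltac:(lia) hdz ltac:(lia) ltac:(lia) ltac:(lia) ltac:(lia)
    ltac:(lia) ltac:(lia) ltac:(lia) ltac:(lia) ltac:(lia) ltac:(lia) ltac:(lia)
    ltac:(lia) ltac:(lia).
lia.
Qed.

Lemma odd_case N b0 P' Q' n (S1 S2 : seq nat) m (s : rat) S2e S2b :
  1 < N -> 0 < P' -> P' < N -> 0 < Q' -> P' <= Q' -> N <= b0 -> N * Q' = P' * b0 + 1 -> 1 < n ->
  size S1 = N - P' -> S1 ++ S2 = mkseq (lenf N b0) N ->
  m :: S2e = S2 -> rcons S2b m = S2 ->
  (P'%:R / Q'%:R < s < (P' + (2 * n - 2) * N)%:R / (Q' + (2 * n - 2) * b0)%:R)%R ->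
  exists d, (1 <= d <= 2 * n - 3) /\
    cyc_contains (CS s) (m.+1 :: S2e ++ dpair d S1 S2 ++ S1 ++ S2b ++ [:: m.+1]).
Proof.
move=> N1 P0 PN Q0 PQ Nb hdet n1 sS1 ES E1 E2 /andP[hs1 hs2].
set t := 2 * n - 2.
have N0 : 0 < N by lia.
have b00 : 0 < b0 by lia.
have s0 : (0 < s)%R.
  apply: le_lt_trans hs1; apply: divr_ge0; exact: ler0n.
have s1 : (s < 1)%R.
  apply: (lt_le_trans hs2); rewrite ler_pdivrMr ?ltr0n ?addn_gt0 ?Q0 // mul1r ler_nat.
  by apply: leq_add => //; apply: leq_mul.
have [a0 [ab Es]] := @num_den_pos s (introT andP (conj s0 s1)).
set a := `|numq s|%N in a0 ab Es; set b := `|denq s|%N in ab Es.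
rewrite Es in hs1 hs2.
rewrite ltq_frac_nat in hs1; last 2 first.
  by lia.
  by lia.
rewrite ltq_frac_nat in hs2; last 2 first.
  by lia.
  by rewrite addn_gt0 Q0.
have hv : a * b0 < b * N.
  rewrite ltnNge; apply/negP => hle.
  have : t * (b * N) <= t * (a * b0) by rewrite leq_mul2l hle orbT.
  nia.
set un := a * Q' - P' * b.
set vn := b * N - a * b0.
have un0 : 0 < un by rewrite /un; lia.
have vn0 : 0 < vn by rewrite /vn; lia.
have huv : un < t * vn.
  have : t * vn = t * (b * N) - t * (a * b0) by rewrite /vn mulnBr.
  rewrite /un; nia.
have Ea : a = un * N + vn * P'.
  apply/eqP; rewrite -eqz_nat PoszD !PoszM /un /vn -!subzn; [|lia|lia].
  apply/eqP.
  have hd : (N%:Z * Q'%:Z = P'%:Z * b0%:Z + 1)%R by rewrite -!PoszM -PoszD hdet.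
  have -> : (((a * Q')%N%:Z - (P' * b)%N%:Z) * N%:Z + ((b * N)%N%:Z - (a * b0)%N%:Z) * P'%:Z
     = a%:Z * (N%:Z * Q'%:Z - P'%:Z * b0%:Z))%R by rewrite !PoszM; ring.
  by rewrite hd; ring.
have Eb : N * b = b0 * a + vn by rewrite /vn; lia.
have [d [hd1 hd2 hd3 hd4]] := @choose_d un vn n un0 vn0 n1 huv.
exists d; split => //.
have hd2n : d * vn < un + vn.
  have : (d - 1) * vn = d * vn - vn by rewrite mulnBl mul1n.
  have : vn <= d * vn by rewrite -{1}(mul1n vn) leq_mul2r; lia.
  lia.
set lam := N - P'.
have Q'b : Q' <= b0.
  have h1 : P' * b0 <= (N - 1) * b0 by rewrite leq_mul2r; lia.
  have h2 : (N - 1) * b0 = N * b0 - b0 by rewrite mulnBl mul1n.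
  have h3 : b0 <= N * b0 by rewrite -{1}(mul1n b0) leq_mul2r; lia.
  have : N * Q' <= N * b0 by lia.
  by rewrite leq_pmul2l.
set q := b0 - Q'.
have hlam : lam * b0 = q * N + 1.
  have h1 : Q' * N <= b0 * N by rewrite leq_mul2r Q'b orbT.
  have h2 : P' * b0 <= N * b0 by rewrite leq_mul2r; lia.
  rewrite /lam /q !mulnBl (mulnC Q' N) hdet.
  rewrite (mulnC Q' N) hdet in h1.
  lia.
set L := (d + 1) * N + P'.
have per : forall x, lenf N b0 (x + N) = lenf N b0 x by move=> x; apply: lenf_per.
pose f := fun i => lenf N b0 (lam + i).
have perf : forall x, f (x + N) = f x by move=> x; rewrite /f addnA per.
have [ES1 ES2] : S1 = mkseq (lenf N b0) lam /\ S2 = mkseq f P'.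
  have e : mkseq (lenf N b0) N = mkseq (lenf N b0) lam ++ mkseq f P'.
    by rewrite -mkseq_add /lam subnK // ltnW.
  move: ES; rewrite e => /eqP; rewrite eqseq_cat; last by rewrite size_mkseq.
  by case/andP => /eqP -> /eqP ->.
have sS2 : size S2 = P' by rewrite ES2 size_mkseq.
have ES21 : S2 ++ S1 = mkseq f N.
  have e : mkseq f N = mkseq f P' ++ mkseq (fun i => f (P' + i)) lam.
    by rewrite -mkseq_add /lam subnKC // ltnW.
  rewrite e ES2 ES1; congr (_ ++ _); apply: eq_mkseq => i.
  rewrite /f addnA (_ : lam + P' = N); last by rewrite /lam; lia.
  by rewrite addnC per.
have hU : S2 ++ dpair d S1 S2 ++ S1 ++ S2 = mkseq f L.
  by rewrite /L -sS2; apply: blockU.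
set M := S2e ++ dpair d S1 S2 ++ S1 ++ S2b.
have EU : m :: M ++ [:: m] = mkseq f L.
  by rewrite -hU /M -!catA cats1 E2 -cat_cons E1.
have EB : m.+1 :: S2e ++ dpair d S1 S2 ++ S1 ++ S2b ++ [:: m.+1] = m.+1 :: M ++ [:: m.+1].
  by rewrite /M -!catA.
have sM : size M + 2 = L.
  by have := congr1 size EU; rewrite size_mkseq /= size_cat /= addn1 addn2.
rewrite EB CS_formula; last by rewrite s0 s1.
have cop : coprime a b by apply: coprime_num_den.
set u := Posz un; set v := Posz vn.
pose Gp := (if (un <= d * vn)%N then v - a%:Z else (d%:Z + 1) * v - u - a%:Z)%R.
have hG1 : (Gp <= v - a%:Z)%R by rewrite /Gp; case: ifP => h; lia.
have hG2 : (Gp <= (d%:Z + 1) * v - u - a%:Z)%R by rewrite /Gp; case: ifP => h; lia.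
have hG3 : (Gp = v - a%:Z \/ Gp = (d%:Z + 1) * v - u - a%:Z)%R by rewrite /Gp; case: ifP => h; [left|right].
apply: (@occ_exists a b _ (- Gp - a%:Z + 1)%R) => //; first by lia.
  rewrite /= size_cat /= addn1 -addn2 sM /L Ea.
  have : (d + 1) * N <= 2 * un * N by rewrite leq_mul2r; lia.
  have : P' <= 2 * vn * P' by rewrite -{1}(mul1n P') leq_mul2r; lia.
  lia.
move=> k; rewrite /= size_cat /= -addn1 -addnA (_ : 1 + 1 = 2) // sM => hk.
have Clam : Cf N b0 lam = q + 1.
  by apply: cdiv_eq => //; rewrite mulnDl hlam; lia.
have Tk : Posz (sumn (take k (m.+1 :: M ++ [:: m.+1]))) =
    (Posz (Cf N b0 (lam + k)) - Posz (q + 1) + Posz (0 < k)%N + Posz (k == L)%N)%R.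
  rewrite (@sum_mod m m m.+1 m.+1 M k); last by rewrite sM.
  rewrite EU sum_take_mkseq //.
  have := @sumn_take_lenf N b0 lam k N0.
  rewrite Clam => ->.
  have : q + 1 <= Cf N b0 (lam + k) by rewrite -Clam; apply: Cf_mono => //; lia.
  rewrite sM; lia.
rewrite Tk.
have [te tl] := @th_eq N b0 (lam + k) N0.
have hdz : (lam%:Z * b0%:Z = q%:Z * N%:Z + 1)%R by lia.
have v1a : (v <= a%:Z)%R.
  have : vn <= vn * P' by rewrite -{1}(muln1 vn) leq_mul2l; lia.
  lia.
case: (posnP k) => [k0|kpos].
  rewrite k0 addn0 Clam.
  lia.
case: (eqVneq k L) => [kL|kL].
  rewrite kL.
  have CL : Cf N b0 (lam + L) = (d + 2) * b0.
    have e : (lam + L) * b0 = (d + 2) * b0 * N.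
      rewrite /L /lam (_ : N - P' + ((d + 1) * N + P') = (d + 2) * N); last by lia.
      by rewrite mulnAC.
    by apply: cdiv_eq => //; rewrite e; lia.
  have hCL : N * Cf N b0 (lam + L) = (lam + L) * b0.
    rewrite CL.
    have e : (lam + L) = (d + 2) * N.
      by rewrite /L /lam; lia.
    by rewrite e mulnCA mulnA.
  have [c1 [c2 c3]] := @core_end_odd N%:Z b0%:Z lam%:Z q%:Z a%:Z b%:Z u v d%:Z L%:Z
    (Cf N b0 (lam + L))%:Z (q + 1)%:Z P'%:Z
    ltac:(lia) ltac:(lia) ltac:(lia) hdz ltac:(lia) ltac:(lia) ltac:(lia) ltac:(lia) ltac:(lia)
    ltac:(lia) ltac:(lia) ltac:(lia) ltac:(lia) ltac:(lia).
  lia.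
have [c1 [c2 c3]] := @core_mid_odd N%:Z b0%:Z lam%:Z q%:Z a%:Z b%:Z u v d%:Z L%:Z k%:Z
    (Cf N b0 (lam + k))%:Z (q + 1)%:Z (th N b0 (lam + k))%:Z P'%:Z
    ltac:(lia) ltac:(lia) ltac:(lia) hdz ltac:(lia) ltac:(lia) ltac:(lia) ltac:(lia)
    ltac:(lia) ltac:(lia) ltac:(lia) ltac:(lia) ltac:(lia) ltac:(lia) ltac:(lia)
    ltac:(lia) ltac:(lia) ltac:(lia) ltac:(lia).
lia.
Qed.

Theorem lemma2p5 (r : rat) (ms : seq nat) (n : nat) (S1 S2 : seq nat) :
  (0 < r < 1)%R ->
  (forall p : nat, (2 <= p)%N -> r != ((p%:R : rat)^-1)%R) ->
  r = cf ms ->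
  (2 <= size ms)%N ->
  all (fun mi => 0 < mi)%N ms ->
  (2 <= last 0%N ms)%N ->
  (2 <= n)%N ->
  let m := head 0%N ms in
  (exists i, rot i (CS r) = S1 ++ S2 ++ S1 ++ S2) ->
  rev S1 = S1 -> rev S2 = S2 ->
  cyc_occ (CS r) S1 = 2%N -> cyc_occ (CS r) S2 = 2%N ->
  head 0%N S1 = m.+1 -> last 0%N S1 = m.+1 -> S1 != [::] ->
  head 0%N S2 = m -> last 0%N S2 = m -> S2 != [::] ->
  (~~ odd (size ms) ->
   forall (s : rat) (S1e S1b : seq nat),
     m.+1 :: S1e = S1 -> rcons S1b m.+1 = S1 ->
     (cf (rcons ms (2 * n - 2)%N) < s < cf (take (size ms).-1 ms))%R ->
     exists d : nat, (1 <= d <= 2 * n - 3)%N /\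
       cyc_contains (CS s) (m :: S1e ++ dpair d S2 S1 ++ S2 ++ S1b ++ [:: m]))
  /\
  (odd (size ms) ->
   forall (s : rat) (S2e S2b : seq nat),
     m :: S2e = S2 -> rcons S2b m = S2 ->
     (cf (take (size ms).-1 ms) < s < cf (rcons ms (2 * n - 2)%N))%R ->
     exists d : nat, (1 <= d <= 2 * n - 3)%N /\
       cyc_contains (CS s) (m.+1 :: S2e ++ dpair d S1 S2 ++ S1 ++ S2b ++ [:: m.+1])).
Proof.
move=> hr _ hrcf hsz hpos hlast hn m hrot _ _ occ1 occ2 hd1 _ ne1 _ _ ne2.
have hm : m = cQ ms %/ cP ms.
  have aux : forall l : seq nat, 2 <= size l -> all (fun x => 0 < x) l -> 2 <= last 0 l ->
      head 0 l = cQ l %/ cP l.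
    case=> [|x [|y tl]] //= _.
    move=> /andP[x0 htl] hl.
    have := @cP_lt_cQ (y :: tl) htl isT hl.
    rewrite /cP /cQ /= => h.
    by rewrite divnMDl ?divn_small ?addn0 //; lia.
  exact: aux.
have aux : forall l : seq nat, 1 <= size l -> l = rcons (belast (head 0 l) (behead l)) (last 0 l).
  by case=> [|x l] //= _; apply: lastI.
have Ems := aux ms (ltnW hsz).
set ms' := belast _ _ in Ems; set mk := last 0 ms in Ems.
have htake : take (size ms).-1 ms = ms'.
  by rewrite Ems size_rcons /= -cats1 take_size_cat.
have ne' : ms' != [::] by rewrite -size_eq0 -lt0n; move: hsz; rewrite Ems size_rcons ltnS.
have pos' : all (fun x => 0 < x) ms' by move: hpos; rewrite Ems all_rcons => /andP[].
have mk2 : 2 <= mk by move: hlast; rewrite Ems last_rcons.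
have eP1 : cP1 ms = cP ms' by rewrite Ems cP1_rcons.
have eQ1 : cQ1 ms = cQ ms' by rewrite Ems cQ1_rcons.
have eP : cP ms = cP1 ms' + mk * cP ms' by rewrite Ems cP_rcons.
have det := cont_det ms.
rewrite eP1 eQ1 in det.
set N := cP ms in hm eP det; set b0 := cQ ms in hm det.
set P' := cP ms' in eP1 eP det; set Q' := cQ ms' in eQ1 det.
have P0 : 0 < P' by apply: cP_pos.
have Q0 : 0 < Q' by apply: cQ_pos.
have PQ : P' <= Q' by apply: cP_le_cQ.
have N2 : 1 < N by rewrite eP; nia.
have PN : P' < N by rewrite eP; nia.
have Nb : N <= b0 by apply: cP_le_cQ.
have hrQ : r = (N%:R / b0%:R)%R by rewrite hrcf cf_PQ.
have hcf' : cf (take (size ms).-1 ms) = (P'%:R / Q'%:R)%R by rewrite htake cf_PQ.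
have hcfr : cf (rcons ms (2 * n - 2)) =
    ((P' + (2 * n - 2) * N)%:R / (Q' + (2 * n - 2) * b0)%:R)%R.
  rewrite cf_PQ; last by rewrite all_rcons hpos andbT; lia.
  by rewrite cP_rcons cQ_rcons eP1 eQ1 /N /b0.
have [lam [q [hlam [lam0 [lamN hlam0]]]]] : exists lam q, lam * b0 = q * N + 1 /\ 0 < lam /\ lam < N /\
    (~~ odd (size ms) -> lam = P' /\ P' * b0 = Q' * N + 1) /\
    (odd (size ms) -> lam = N - P' /\ N * Q' = P' * b0 + 1).
  rewrite -signr_odd in det.
  case: (boolP (odd (size ms))) => hodd.
    rewrite hodd /= in det.
    have hd : N * Q' = P' * b0 + 1 by lia.
    have Q'b : Q' <= b0.
      have h1 : P' * b0 <= (N - 1) * b0 by rewrite leq_mul2r; lia.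
      have h2 : (N - 1) * b0 = N * b0 - b0 by rewrite mulnBl mul1n.
      have h3 : b0 <= N * b0 by rewrite -{1}(mul1n b0) leq_mul2r; lia.
      have : N * Q' <= N * b0 by lia.
      by rewrite leq_pmul2l //; lia.
    exists (N - P'), (b0 - Q'); split.
      have h1 : Q' * N <= b0 * N by rewrite leq_mul2r Q'b orbT.
      have h2 : P' * b0 <= N * b0 by rewrite leq_mul2r; lia.
      rewrite !mulnBl (mulnC Q' N) hd.
      rewrite (mulnC Q' N) hd in h1.
      lia.
    by split; [lia|split; [lia|split]].
  rewrite (negbTE hodd) /= in det.
  have hd : P' * b0 = Q' * N + 1 by lia.
  by exists P', Q'; split; [|split; [|split; [|split]]].
move: hlam0 => [hev hod].
have cop := @coprime_of lam b0 q N hlam.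
have hnum : `|numq r|%N = N /\ `|denq r|%N = b0.
  have -> : r = ((Posz N)%:~R / (Posz b0)%:~R)%R by rewrite hrQ.
  by rewrite coprimeq_num ?coprimeq_den //= gtr0_sg ?mul1r //=; [|lia]; rewrite eqz_nat; case: eqP => //; lia.
have CSr : CS r = mkseq (lenf N b0) (2 * N) by rewrite CS_formula // (proj1 hnum) (proj2 hnum).
have [i hi] := hrot; rewrite CSr in hi occ1 occ2.
rewrite hm in hd1.
have [sS1 ES] := @ident N b0 lam q i S1 S2 N2 hlam (introT andP (conj lam0 lamN)) hi occ1 occ2 hd1 ne1 ne2.
split.
  move=> hev' s S1e S1b E1 E2 hs.
  have [el hd] := hev hev'.
  rewrite hcfr hcf' in hs.
  by apply: (@even_case N b0 P' Q' n S1 S2 m s S1e S1b) => //; rewrite sS1 el.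
move=> hod' s S2e S2b E1 E2 hs.
have [el hd] := hod hod'.
rewrite hcfr hcf' in hs.
by apply: (@odd_case N b0 P' Q' n S1 S2 m s S2e S2b) => //; rewrite sS1 el.
Qed.
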